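(* Let $\alpha\neq0$ be real, let $\vec a$ be a timelike vector of $\mathbb L^3$, and let $S$ be a spacelike surface of $\mathbb L^3$ that is invariant under the one-parameter group of rotations of $\mathbb L^3$ about a spacelike axis $L$. Suppose that $S$ satisfies $$H(p)=\alpha\frac{\langle N(p),\vec a\rangle}{\langle p,\vec a\rangle}\qquad (p\in S).$$ Then either $\vec a$ is orthogonal to $L$, or (up to a rigid motion taking $L$ to the $x$-axis) $S$ is the hyperbolic plane $\mathbb H^2(r)$ for some $r>0$, in which case $\vec a$ may be an arbitrary timelike vector.
   Context: $\mathbb L^3$ is $\mathbb R^3$ with the metric $\langle\cdot,\cdot\rangle=dx^2+dy^2-dz^2$. A spacelike surface has Riemannian induced metric and timelike unit normal $N$; $H$ denotes its mean curvature, the trace of the second fundamental form with respect to $N$. Rotations about a spacelike axis: when the axis is the $x$-axis, these are the linear isometries $\begin{pmatrix}1&0&0\\0&\cosh\theta&\sinh\theta\\0&\sinh\theta&\cosh\theta\end{pmatrix}$, $\theta\in\mathbb R$, and a general spacelike axis is obtained from this by a rigid motion. The hyperbolic plane is $\mathbb H^2(r)=\{p\in\mathbb L^3:\langle p,p\rangle=-r^2,\ z>0\}$. *)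

(* Defs.v *)
From Stdlib Require Import Reals.
From Coquelicot Require Import Coquelicot.
Open Scope R_scope.

Record vec3 := V3 { vx : R; vy : R; vz : R }.

Definition vadd (p q : vec3) : vec3 := V3 (vx p + vx q) (vy p + vy q) (vz p + vz q).
Definition vscale (c : R) (p : vec3) : vec3 := V3 (c * vx p) (c * vy p) (c * vz p).

Definition lor (p q : vec3) : R := vx p * vx q + vy p * vy q - vz p * vz q.

Definition timelike (v : vec3) : Prop := lor v v < 0.

Definition e1 : vec3 := V3 1 0 0.

(** Rotations about the x-axis (spacelike axis). *)
Definition rotx (theta : R) (p : vec3) : vec3 :=
  V3 (vx p) (cosh theta * vy p + sinh theta * vz p)
            (sinh theta * vy p + cosh theta * vz p).

Definition lorentz_linear (A : vec3 -> vec3) : Prop :=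
  (forall p q, A (vadd p q) = vadd (A p) (A q)) /\
  (forall c p, A (vscale c p) = vscale c (A p)) /\
  (forall p q, lor (A p) (A q) = lor p q).

Definition rigid_motion (A : vec3 -> vec3) (b : vec3) : Prop := lorentz_linear A.

Definition motion (A : vec3 -> vec3) (b : vec3) (p : vec3) : vec3 := vadd (A p) b.

Definition on_x_axis (p : vec3) : Prop := vy p = 0 /\ vz p = 0.

Definition in_H2 (r : R) (p : vec3) : Prop := lor p p = - r ^ 2 /\ 0 < vz p.

Definition open2 (U : R -> R -> Prop) : Prop :=
  forall u v, U u v -> exists d, 0 < d /\
    forall u' v', Rabs (u' - u) < d -> Rabs (v' - v) < d -> U u' v'.

Definition near3 (d : R) (p q : vec3) : Prop :=
  Rabs (vx q - vx p) < d /\ Rabs (vy q - vy p) < d /\ Rabs (vz q - vz p) < d.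

Definition open3 (W : vec3 -> Prop) : Prop :=
  forall p, W p -> exists d, 0 < d /\ forall q, near3 d p q -> W q.

Definition rel_open (S P : vec3 -> Prop) : Prop :=
  forall p, S p -> P p -> exists d, 0 < d /\ forall q, S q -> near3 d p q -> P q.

Definition connected (S : vec3 -> Prop) : Prop :=
  forall P : vec3 -> Prop, rel_open S P -> rel_open S (fun q => ~ P q) ->
    (forall p, S p -> P p) \/ (forall p, S p -> ~ P p).

Definition cont2 (U : R -> R -> Prop) (g : R -> R -> R) : Prop :=
  forall u v, U u v -> forall eps, 0 < eps -> exists d, 0 < d /\
    forall u' v', U u' v' -> Rabs (u' - u) < d -> Rabs (v' - v) < d ->
      Rabs (g u' v' - g u v) < eps.

Definition du (f : R -> R -> R) : R -> R -> R := fun u v => Derive (fun s => f s v) u.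
Definition dv (f : R -> R -> R) : R -> R -> R := fun u v => Derive (fun t => f u t) v.

Definition ex_du (U : R -> R -> Prop) (f : R -> R -> R) : Prop :=
  forall u v, U u v -> ex_derive (fun s => f s v) u.
Definition ex_dv (U : R -> R -> Prop) (f : R -> R -> R) : Prop :=
  forall u v, U u v -> ex_derive (fun t => f u t) v.

Definition C2 (U : R -> R -> Prop) (f : R -> R -> R) : Prop :=
  cont2 U f /\ ex_du U f /\ ex_dv U f /\ cont2 U (du f) /\ cont2 U (dv f) /\
  ex_du U (du f) /\ ex_dv U (du f) /\ ex_du U (dv f) /\ ex_dv U (dv f) /\
  cont2 U (du (du f)) /\ cont2 U (dv (du f)) /\
  cont2 U (du (dv f)) /\ cont2 U (dv (dv f)).

Definition cX (X : R -> R -> vec3) : R -> R -> R := fun u v => vx (X u v).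
Definition cY (X : R -> R -> vec3) : R -> R -> R := fun u v => vy (X u v).
Definition cZ (X : R -> R -> vec3) : R -> R -> R := fun u v => vz (X u v).

Definition vdu (X : R -> R -> vec3) : R -> R -> vec3 :=
  fun u v => V3 (du (cX X) u v) (du (cY X) u v) (du (cZ X) u v).
Definition vdv (X : R -> R -> vec3) : R -> R -> vec3 :=
  fun u v => V3 (dv (cX X) u v) (dv (cY X) u v) (dv (cZ X) u v).

(** (U, X) is a local parametrization (chart) of S: a C^2 injective map from
    an open U ⊆ R^2, which is a homeomorphism onto S ∩ W for some open W,
    whose induced metric (first fundamental form w.r.t. lor) is positive definite. *)
Definition is_chart (S : vec3 -> Prop) (U : R -> R -> Prop) (X : R -> R -> vec3) : Prop :=
  open2 U /\
  C2 U (cX X) /\ C2 U (cY X) /\ C2 U (cZ X) /\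
  (forall u v, U u v -> S (X u v)) /\
  (forall u v u' v', U u v -> U u' v' -> X u v = X u' v' -> u = u' /\ v = v') /\
  (exists W, open3 W /\ (forall u v, U u v -> W (X u v)) /\
     (forall q, S q -> W q -> exists u v, U u v /\ X u v = q)) /\
  (forall u v, U u v -> forall eps, 0 < eps -> exists d, 0 < d /\
     forall u' v', U u' v' -> near3 d (X u v) (X u' v') ->
       Rabs (u' - u) < eps /\ Rabs (v' - v) < eps) /\
  (forall u v, U u v ->
     let E := lor (vdu X u v) (vdu X u v) in
     let F := lor (vdu X u v) (vdv X u v) in
     let G := lor (vdv X u v) (vdv X u v) in
     0 < E /\ 0 < E * G - F * F).

Definition spacelike_surface (S : vec3 -> Prop) : Prop :=
  forall p, S p -> exists U X, is_chart S U X /\ exists u v, U u v /\ X u v = p.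

Definition unit_normal_field (S : vec3 -> Prop) (N : vec3 -> vec3) : Prop :=
  (forall p, S p -> lor (N p) (N p) = -1) /\
  (forall U X, is_chart S U X -> forall u v, U u v ->
     lor (N (X u v)) (vdu X u v) = 0 /\ lor (N (X u v)) (vdv X u v) = 0) /\
  (forall p, S p -> forall eps, 0 < eps -> exists d, 0 < d /\
     forall q, S q -> near3 d p q -> near3 eps (N p) (N q)).

(** Mean curvature at X(u,v): trace (w.r.t. the induced metric) of the second
    fundamental form h_ij = <X_ij, N>, i.e. H = (G l - 2 F m + E n)/(E G - F^2). *)
Definition mean_curv (X : R -> R -> vec3) (N : vec3 -> vec3) (u v : R) : R :=
  let Xu := vdu X u v in
  let Xv := vdv X u v in
  let Nn := N (X u v) in
  let E := lor Xu Xu in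
  let F := lor Xu Xv in
  let G := lor Xv Xv in
  let l := lor (vdu (vdu X) u v) Nn in
  let m := lor (vdv (vdu X) u v) Nn in
  let n := lor (vdv (vdv X) u v) Nn in
  (G * l - 2 * F * m + E * n) / (E * G - F * F).

(* Main.v *)
Require Import Defs.
From Stdlib Require Import Reals Lra Psatz FunctionalExtensionality Classical.
From Coquelicot Require Import Coquelicot.
Open Scope R_scope.

Lemma locally_R (x d : R) (P : R -> Prop) : 0 < d ->
  (forall y, Rabs (y - x) < d -> P y) -> locally x P.
Proof. intros Hd H. exists (mkposreal d Hd). intros y Hy. apply H. exact Hy. Qed.

Lemma vec_ext (p q : vec3) : vx p = vx q -> vy p = vy q -> vz p = vz q -> p = q.
Proof. destruct p, q; simpl; intros; subst; reflexivity. Qed.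

Lemma lor_sym p q : lor p q = lor q p. Proof. unfold lor; ring. Qed.
Lemma lor_vadd_l p q r : lor (vadd p q) r = lor p r + lor q r.
Proof. unfold lor, vadd; simpl; ring. Qed.
Lemma lor_vadd_r p q r : lor r (vadd p q) = lor r p + lor r q.
Proof. unfold lor, vadd; simpl; ring. Qed.
Lemma lor_vscale_l c p r : lor (vscale c p) r = c * lor p r.
Proof. unfold lor, vscale; simpl; ring. Qed.
Lemma lor_vscale_r c p r : lor r (vscale c p) = c * lor r p.
Proof. unfold lor, vscale; simpl; ring. Qed.

Definition e2 : vec3 := V3 0 1 0.
Definition e3 : vec3 := V3 0 0 1.

Definition det3 (b1 b2 b3 : vec3) : R :=
  vx b1 * (vy b2 * vz b3 - vz b2 * vy b3) - vy b1 * (vx b2 * vz b3 - vz b2 * vx b3)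
  + vz b1 * (vx b2 * vy b3 - vy b2 * vx b3).

Definition gram3 (b1 b2 b3 : vec3) : R :=
  let g11 := lor b1 b1 in let g12 := lor b1 b2 in let g13 := lor b1 b3 in
  let g22 := lor b2 b2 in let g23 := lor b2 b3 in let g33 := lor b3 b3 in
  g11 * (g22 * g33 - g23 * g23) - g12 * (g12 * g33 - g23 * g13)
  + g13 * (g12 * g23 - g22 * g13).

Lemma gram3_det b1 b2 b3 : gram3 b1 b2 b3 = - (det3 b1 b2 b3)^2.
Proof. unfold gram3, det3, lor; ring. Qed.

Lemma zero_lemma w b1 b2 b3 : lor w b1 = 0 -> lor w b2 = 0 -> lor w b3 = 0 ->
  gram3 b1 b2 b3 <> 0 -> vx w = 0 /\ vy w = 0 /\ vz w = 0.
Proof.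
  intros h1 h2 h3 hg. rewrite gram3_det in hg.
  assert (hD : det3 b1 b2 b3 <> 0) by (intro E; apply hg; rewrite E; ring).
  destruct w as [w1 w2 w3], b1 as [x1 y1 z1], b2 as [x2 y2 z2], b3 as [x3 y3 z3].
  unfold lor, det3 in *; simpl in *.
  set (D := x1 * (y2 * z3 - z2 * y3) - y1 * (x2 * z3 - z2 * x3) + z1 * (x2 * y3 - y2 * x3)) in *.
  set (l1 := w1*x1 + w2*y1 - w3*z1) in *.
  set (l2 := w1*x2 + w2*y2 - w3*z2) in *.
  set (l3 := w1*x3 + w2*y3 - w3*z3) in *.
  assert (E1 : D * w1 = (y2*z3 - z2*y3) * l1 - (y1*z3 - z1*y3) * l2 + (y1*z2 - z1*y2) * l3)
    by (unfold D, l1, l2, l3; ring).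
  assert (E2 : D * w2 = - (x2*z3 - z2*x3) * l1 + (x1*z3 - z1*x3) * l2 - (x1*z2 - z1*x2) * l3)
    by (unfold D, l1, l2, l3; ring).
  assert (E3 : D * (- w3) = (x2*y3 - y2*x3) * l1 - (x1*y3 - y1*x3) * l2 + (x1*y2 - y1*x2) * l3)
    by (unfold D, l1, l2, l3; ring).
  rewrite h1, h2, h3 in E1, E2, E3.
  repeat split.
  - apply (Rmult_eq_reg_l D); [lra|auto].
  - apply (Rmult_eq_reg_l D); [lra|auto].
  - apply (Rmult_eq_reg_l D); [lra|auto].
Qed.
Definition linear3 (M : vec3 -> vec3) : Prop :=
  (forall p q, M (vadd p q) = vadd (M p) (M q)) /\
  (forall c p, M (vscale c p) = vscale c (M p)).

Lemma vec_decomp p : p = vadd (vadd (vscale (vx p) e1) (vscale (vy p) e2)) (vscale (vz p) e3).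
Proof. apply vec_ext; unfold vadd, vscale, e1, e2, e3; simpl; ring. Qed.

Lemma lin_decomp M p : linear3 M ->
  M p = vadd (vadd (vscale (vx p) (M e1)) (vscale (vy p) (M e2))) (vscale (vz p) (M e3)).
Proof. intros [Ha Hs]. rewrite (vec_decomp p) at 1. rewrite !Ha, !Hs. reflexivity. Qed.

Lemma lin_x M p : linear3 M -> vx (M p) = vx p * vx (M e1) + vy p * vx (M e2) + vz p * vx (M e3).
Proof. intro H. rewrite (lin_decomp M p H) at 1. unfold vadd, vscale; simpl. ring. Qed.
Lemma lin_y M p : linear3 M -> vy (M p) = vx p * vy (M e1) + vy p * vy (M e2) + vz p * vy (M e3).
Proof. intro H. rewrite (lin_decomp M p H) at 1. unfold vadd, vscale; simpl. ring. Qed.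
Lemma lin_z M p : linear3 M -> vz (M p) = vx p * vz (M e1) + vy p * vz (M e2) + vz p * vz (M e3).
Proof. intro H. rewrite (lin_decomp M p H) at 1. unfold vadd, vscale; simpl. ring. Qed.

Lemma bound3 x1 x2 x3 a b c d : 0 < d -> Rabs x1 < d -> Rabs x2 < d -> Rabs x3 < d ->
  Rabs (x1 * a + x2 * b + x3 * c) <= d * (Rabs a + Rabs b + Rabs c).
Proof.
  intros Hd H1 H2 H3.
  eapply Rle_trans. apply Rabs_triang.
  eapply Rle_trans. apply Rplus_le_compat_r. apply Rabs_triang.
  rewrite !Rabs_mult.
  pose proof (Rabs_pos a). pose proof (Rabs_pos b). pose proof (Rabs_pos c).
  pose proof (Rabs_pos x1). pose proof (Rabs_pos x2). pose proof (Rabs_pos x3).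
  assert (Rabs x1 * Rabs a <= d * Rabs a) by (apply Rmult_le_compat_r; lra).
  assert (Rabs x2 * Rabs b <= d * Rabs b) by (apply Rmult_le_compat_r; lra).
  assert (Rabs x3 * Rabs c <= d * Rabs c) by (apply Rmult_le_compat_r; lra).
  lra.
Qed.

Lemma row_bound x1 x2 x3 a b c d K : 0 < d -> Rabs x1 < d -> Rabs x2 < d -> Rabs x3 < d ->
  Rabs a + Rabs b + Rabs c <= K ->
  Rabs (x1 * a + x2 * b + x3 * c) <= d * K.
Proof.
  intros Hd H1 H2 H3 HK. eapply Rle_trans. apply (bound3 x1 x2 x3 a b c d); assumption.
  apply Rmult_le_compat_l; lra.
Qed.

Lemma lin_cont M : linear3 M -> forall eps, 0 < eps -> exists d, 0 < d /\
  forall p q, near3 d p q -> near3 eps (M p) (M q).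
Proof.
  intros HM eps Heps.
  set (K := Rabs (vx (M e1)) + Rabs (vx (M e2)) + Rabs (vx (M e3))
          + Rabs (vy (M e1)) + Rabs (vy (M e2)) + Rabs (vy (M e3))
          + Rabs (vz (M e1)) + Rabs (vz (M e2)) + Rabs (vz (M e3))).
  assert (HK : 0 <= K) by (unfold K; repeat apply Rplus_le_le_0_compat; apply Rabs_pos).
  assert (Hd : 0 < eps / (1 + K)) by (apply Rdiv_lt_0_compat; lra).
  exists (eps / (1 + K)). split. { exact Hd. }
  set (d := eps / (1 + K)) in *.
  assert (HdK : d * K < eps).
  { unfold d, Rdiv. rewrite Rmult_assoc. rewrite <- (Rmult_1_r eps) at 2.
    apply Rmult_lt_compat_l; [lra|]. apply (Rmult_lt_reg_l (1+K)); [lra|].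
    rewrite <- Rmult_assoc, Rinv_r; lra. }
  assert (HdK' : 0 <= d * K) by (apply Rmult_le_pos; lra).
  pose proof (Rabs_pos (vx (M e1))). pose proof (Rabs_pos (vx (M e2))). pose proof (Rabs_pos (vx (M e3))).
  pose proof (Rabs_pos (vy (M e1))). pose proof (Rabs_pos (vy (M e2))). pose proof (Rabs_pos (vy (M e3))).
  pose proof (Rabs_pos (vz (M e1))). pose proof (Rabs_pos (vz (M e2))). pose proof (Rabs_pos (vz (M e3))).
  intros p q [N1 [N2 N3]].
  unfold near3. rewrite (lin_x M p HM), (lin_x M q HM), (lin_y M p HM), (lin_y M q HM), (lin_z M p HM), (lin_z M q HM).
  repeat split.
  - eapply Rle_lt_trans; [|apply HdK].
    replace (vx q * vx (M e1) + vy q * vx (M e2) + vz q * vx (M e3) -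
      (vx p * vx (M e1) + vy p * vx (M e2) + vz p * vx (M e3))) with
      ((vx q - vx p) * vx (M e1) + (vy q - vy p) * vx (M e2) + (vz q - vz p) * vx (M e3)) by ring.
    apply row_bound; try assumption. unfold K; lra.
  - eapply Rle_lt_trans; [|apply HdK].
    replace (vx q * vy (M e1) + vy q * vy (M e2) + vz q * vy (M e3) -
      (vx p * vy (M e1) + vy p * vy (M e2) + vz p * vy (M e3))) with
      ((vx q - vx p) * vy (M e1) + (vy q - vy p) * vy (M e2) + (vz q - vz p) * vy (M e3)) by ring.
    apply row_bound; try assumption. unfold K; lra.
  - eapply Rle_lt_trans; [|apply HdK].
    replace (vx q * vz (M e1) + vy q * vz (M e2) + vz q * vz (M e3) -
      (vx p * vz (M e1) + vy p * vz (M e2) + vz p * vz (M e3))) with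
      ((vx q - vx p) * vz (M e1) + (vy q - vy p) * vz (M e2) + (vz q - vz p) * vz (M e3)) by ring.
    apply row_bound; try assumption. unfold K; lra.
Qed.

Lemma ll_linear A : lorentz_linear A -> linear3 A.
Proof. intros [h1 [h2 _]]; split; auto. Qed.

Lemma lor_e1 x : lor x e1 = vx x. Proof. unfold lor, e1; simpl; ring. Qed.
Lemma lor_e2 x : lor x e2 = vy x. Proof. unfold lor, e2; simpl; ring. Qed.
Lemma lor_e3 x : lor x e3 = - vz x. Proof. unfold lor, e3; simpl; ring. Qed.

Definition Ainv (A : vec3 -> vec3) (v : vec3) : vec3 :=
  V3 (lor v (A e1)) (lor v (A e2)) (- lor v (A e3)).

Lemma Ainv_lin A : linear3 (Ainv A).
Proof. split; intros; apply vec_ext; unfold Ainv, vadd, vscale, lor; simpl; ring. Qed.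

Section AinvSec.
Variable A : vec3 -> vec3.
Hypothesis HA : lorentz_linear A.

Lemma A_pres p q : lor (A p) (A q) = lor p q.
Proof. destruct HA as [_ [_ h]]; auto. Qed.

Lemma A_Ainv v : A (Ainv A v) = v.
Proof.
  pose proof (ll_linear A HA) as HL.
  set (w := vadd v (vscale (-1) (A (Ainv A v)))).
  assert (Hw : forall b, lor w (A b) = lor v (A b) - lor (Ainv A v) b).
  { intro b. unfold w. rewrite lor_vadd_l, lor_vscale_l, A_pres. ring. }
  assert (G : gram3 (A e1) (A e2) (A e3) <> 0).
  { unfold gram3. rewrite !A_pres. unfold lor, e1, e2, e3; simpl. lra. }
  destruct (zero_lemma w (A e1) (A e2) (A e3)) as [z1 [z2 z3]]; auto.
  - rewrite Hw, lor_e1. unfold Ainv at 1; simpl. ring.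
  - rewrite Hw, lor_e2. unfold Ainv at 1; simpl. ring.
  - rewrite Hw, lor_e3. unfold Ainv at 1; simpl. ring.
  - unfold w, vadd, vscale in z1, z2, z3; simpl in *. apply vec_ext; lra.
Qed.

Lemma Ainv_A v : Ainv A (A v) = v.
Proof. apply vec_ext; unfold Ainv; simpl; rewrite A_pres; unfold lor, e1, e2, e3; simpl; ring. Qed.

Lemma Ainv_pres u v : lor (Ainv A u) (Ainv A v) = lor u v.
Proof. transitivity (lor (A (Ainv A u)) (A (Ainv A v))). symmetry; apply A_pres. rewrite !A_Ainv. reflexivity. Qed.

Lemma lor_A_l u v : lor (A u) v = lor u (Ainv A v).
Proof. transitivity (lor (A u) (A (Ainv A v))). rewrite A_Ainv; reflexivity. apply A_pres. Qed.

Lemma Ainv_ll : lorentz_linear (Ainv A).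
Proof. destruct (Ainv_lin A) as [h1 h2]. split; [|split]; auto. apply Ainv_pres. Qed.
End AinvSec.

Lemma cosh_sinh x : cosh x * cosh x - sinh x * sinh x = 1.
Proof.
  unfold cosh, sinh.
  assert (H : exp x * exp (- x) = 1) by (rewrite <- exp_plus; replace (x + - x) with 0 by ring; apply exp_0).
  rewrite <- H. field.
Qed.
Lemma cosh_opp x : cosh (- x) = cosh x.
Proof. unfold cosh. rewrite Ropp_involutive. lra. Qed.
Lemma sinh_opp x : sinh (- x) = - sinh x.
Proof. unfold sinh. rewrite Ropp_involutive. lra. Qed.

Lemma rotx_ll t : lorentz_linear (rotx t).
Proof.
  pose proof (cosh_sinh t).
  split; [|split]; intros; try (apply vec_ext; unfold rotx, vadd, vscale; simpl; ring).
  unfold lor, rotx; simpl.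
  set (c := cosh t) in *. set (s := sinh t) in *.
  transitivity (vx p * vx q + (c*c - s*s) * (vy p * vy q - vz p * vz q)); [ring|].
  rewrite H. ring.
Qed.

Lemma rotx_inv t p : rotx t (rotx (- t) p) = p.
Proof.
  pose proof (cosh_sinh t) as H. apply vec_ext; unfold rotx; simpl; rewrite ?cosh_opp, ?sinh_opp;
  set (c := cosh t) in *; set (s := sinh t) in *.
  - reflexivity.
  - transitivity ((c*c - s*s) * vy p); [ring|]. rewrite H; ring.
  - transitivity ((c*c - s*s) * vz p); [ring|]. rewrite H; ring.
Qed.

Lemma ll_comp F G : lorentz_linear F -> lorentz_linear G -> lorentz_linear (fun p => F (G p)).
Proof.
  intros [f1 [f2 f3]] [g1 [g2 g3]]. split; [|split]; intros.
  - rewrite g1, f1; auto.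
  - rewrite g2, f2; auto.
  - rewrite f3, g3; auto.
Qed.

Definition lin3 (k1 k2 k3 k0 : R) (f g h : R -> R -> R) : R -> R -> R :=
  fun u v => k1 * f u v + k2 * g u v + k3 * h u v + k0.

Lemma is_derive_lin3 (f g h : R -> R) k1 k2 k3 k0 x df dg dh :
  is_derive f x df -> is_derive g x dg -> is_derive h x dh ->
  is_derive (fun s => k1 * f s + k2 * g s + k3 * h s + k0) x (k1 * df + k2 * dg + k3 * dh).
Proof.
  intros Hf Hg Hh. auto_derive.
  - repeat split; eexists; eassumption.
  - change (Derive (fun x => f x) x) with (Derive f x).
    change (Derive (fun x => g x) x) with (Derive g x).
    change (Derive (fun x => h x) x) with (Derive h x).
    rewrite (is_derive_unique _ _ _ Hf), (is_derive_unique _ _ _ Hg), (is_derive_unique _ _ _ Hh). ring.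
Qed.

Lemma du_lin3 U k1 k2 k3 k0 f g h : ex_du U f -> ex_du U g -> ex_du U h ->
  forall u v, U u v ->
  is_derive (fun s => lin3 k1 k2 k3 k0 f g h s v) u (lin3 k1 k2 k3 0 (du f) (du g) (du h) u v).
Proof.
  intros Hf Hg Hh u v Huv. unfold lin3.
  replace (k1 * du f u v + k2 * du g u v + k3 * du h u v + 0) with
    (k1 * du f u v + k2 * du g u v + k3 * du h u v) by ring.
  apply (is_derive_lin3 (fun s => f s v) (fun s => g s v) (fun s => h s v));
   apply Derive_correct; auto.
Qed.

Lemma dv_lin3 U k1 k2 k3 k0 f g h : ex_dv U f -> ex_dv U g -> ex_dv U h ->
  forall u v, U u v ->
  is_derive (fun t => lin3 k1 k2 k3 k0 f g h u t) v (lin3 k1 k2 k3 0 (dv f) (dv g) (dv h) u v).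
Proof.
  intros Hf Hg Hh u v Huv. unfold lin3.
  replace (k1 * dv f u v + k2 * dv g u v + k3 * dv h u v + 0) with
    (k1 * dv f u v + k2 * dv g u v + k3 * dv h u v) by ring.
  apply (is_derive_lin3 (fun t => f u t) (fun t => g u t) (fun t => h u t));
   apply Derive_correct; auto.
Qed.

Lemma cont2_lin3 U k1 k2 k3 k0 f g h : cont2 U f -> cont2 U g -> cont2 U h ->
  cont2 U (lin3 k1 k2 k3 k0 f g h).
Proof.
  intros Hf Hg Hh u v Huv eps Heps.
  set (K := Rabs k1 + Rabs k2 + Rabs k3).
  assert (HK : 0 <= K) by (unfold K; pose proof (Rabs_pos k1); pose proof (Rabs_pos k2); pose proof (Rabs_pos k3); lra).
  assert (He : 0 < eps / (1 + K)) by (apply Rdiv_lt_0_compat; lra).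
  set (e := eps / (1 + K)) in *.
  assert (HeK : e * K < eps).
  { unfold e, Rdiv. rewrite Rmult_assoc. rewrite <- (Rmult_1_r eps) at 2.
    apply Rmult_lt_compat_l; [lra|]. apply (Rmult_lt_reg_l (1+K)); [lra|].
    rewrite <- Rmult_assoc, Rinv_r; lra. }
  destruct (Hf u v Huv e He) as [d1 [Hd1 H1]].
  destruct (Hg u v Huv e He) as [d2 [Hd2 H2]].
  destruct (Hh u v Huv e He) as [d3 [Hd3 H3]].
  exists (Rmin d1 (Rmin d2 d3)). split.
  { apply Rmin_pos; auto. apply Rmin_pos; auto. }
  intros u' v' HU Hu Hv.
  assert (A1 : Rmin d1 (Rmin d2 d3) <= d1) by apply Rmin_l.
  assert (A2 : Rmin d1 (Rmin d2 d3) <= d2) by (eapply Rle_trans; [apply Rmin_r|apply Rmin_l]).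
  assert (A3 : Rmin d1 (Rmin d2 d3) <= d3) by (eapply Rle_trans; [apply Rmin_r|apply Rmin_r]).
  unfold lin3.
  replace (k1 * f u' v' + k2 * g u' v' + k3 * h u' v' + k0 - (k1 * f u v + k2 * g u v + k3 * h u v + k0))
    with ((f u' v' - f u v) * k1 + (g u' v' - g u v) * k2 + (h u' v' - h u v) * k3) by ring.
  eapply Rle_lt_trans; [|apply HeK].
  apply bound3; [exact He| apply H1 | apply H2 | apply H3]; auto; lra.
Qed.

Lemma open2_locally U u v : open2 U -> U u v ->
  locally u (fun s => U s v) /\ locally v (fun t => U u t).
Proof.
  intros HU Huv. destruct (HU u v Huv) as [d [Hd H]]. split.
  - apply (locally_R u d); auto. intros y Hy. apply H; auto. rewrite Rminus_diag, Rabs_R0; auto.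
  - apply (locally_R v d); auto. intros y Hy. apply H; auto. rewrite Rminus_diag, Rabs_R0; auto.
Qed.

Lemma locally_impl (x : R) (P Q : R -> Prop) : locally x P -> (forall y, P y -> Q y) -> locally x Q.
Proof. intros [e He] H. exists e. intros y Hy. apply H, He, Hy. Qed.

Lemma du_ext U F G : open2 U -> (forall u v, U u v -> F u v = G u v) ->
  forall u v, U u v -> du F u v = du G u v.
Proof.
  intros HU HE u v Huv. unfold du. apply Derive_ext_loc.
  destruct (open2_locally U u v HU Huv) as [L _].
  eapply locally_impl; [exact L|]. intros y Hy. apply HE; auto.
Qed.
Lemma dv_ext U F G : open2 U -> (forall u v, U u v -> F u v = G u v) ->
  forall u v, U u v -> dv F u v = dv G u v.
Proof.
  intros HU HE u v Huv. unfold dv. apply Derive_ext_loc.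
  destruct (open2_locally U u v HU Huv) as [_ L].
  eapply locally_impl; [exact L|]. intros y Hy. apply HE; auto.
Qed.
Lemma ex_du_ext U F G : open2 U -> (forall u v, U u v -> F u v = G u v) ->
  ex_du U F -> ex_du U G.
Proof.
  intros HU HE HF u v Huv. eapply ex_derive_ext_loc; [|apply HF; exact Huv].
  destruct (open2_locally U u v HU Huv) as [L _].
  eapply locally_impl; [exact L|]. intros y Hy. apply HE; auto.
Qed.
Lemma ex_dv_ext U F G : open2 U -> (forall u v, U u v -> F u v = G u v) ->
  ex_dv U F -> ex_dv U G.
Proof.
  intros HU HE HF u v Huv. eapply ex_derive_ext_loc; [|apply HF; exact Huv].
  destruct (open2_locally U u v HU Huv) as [_ L].
  eapply locally_impl; [exact L|]. intros y Hy. apply HE; auto.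
Qed.
Lemma cont2_ext U F G : (forall u v, U u v -> F u v = G u v) -> cont2 U F -> cont2 U G.
Proof.
  intros HE HF u v Huv eps Heps. destruct (HF u v Huv eps Heps) as [d [Hd H]].
  exists d; split; auto. intros u' v' H' H1 H2. rewrite <- !HE; auto.
Qed.

Lemma ex_du_lin3 U k1 k2 k3 k0 f g h : ex_du U f -> ex_du U g -> ex_du U h ->
  ex_du U (lin3 k1 k2 k3 k0 f g h).
Proof. intros Hf Hg Hh u v Huv. eexists. apply (du_lin3 U); auto. Qed.
Lemma ex_dv_lin3 U k1 k2 k3 k0 f g h : ex_dv U f -> ex_dv U g -> ex_dv U h ->
  ex_dv U (lin3 k1 k2 k3 k0 f g h).
Proof. intros Hf Hg Hh u v Huv. eexists. apply (dv_lin3 U); auto. Qed.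

Lemma du_lin3_eq U k1 k2 k3 k0 f g h : ex_du U f -> ex_du U g -> ex_du U h ->
  forall u v, U u v -> du (lin3 k1 k2 k3 k0 f g h) u v = lin3 k1 k2 k3 0 (du f) (du g) (du h) u v.
Proof. intros. apply is_derive_unique. apply (du_lin3 U); auto. Qed.
Lemma dv_lin3_eq U k1 k2 k3 k0 f g h : ex_dv U f -> ex_dv U g -> ex_dv U h ->
  forall u v, U u v -> dv (lin3 k1 k2 k3 k0 f g h) u v = lin3 k1 k2 k3 0 (dv f) (dv g) (dv h) u v.
Proof. intros. apply is_derive_unique. apply (dv_lin3 U); auto. Qed.

Lemma du_du_lin3 U k1 k2 k3 k0 f g h : open2 U -> C2 U f -> C2 U g -> C2 U h ->
  forall u v, U u v -> du (du (lin3 k1 k2 k3 k0 f g h)) u v =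
     lin3 k1 k2 k3 0 (du (du f)) (du (du g)) (du (du h)) u v.
Proof.
  intros HU [_ [f1 [f2 [_ [_ [f3 [f4 [f5 [f6 _]]]]]]]]] [_ [g1 [g2 [_ [_ [g3 [g4 [g5 [g6 _]]]]]]]]]
    [_ [h1 [h2 [_ [_ [h3 [h4 [h5 [h6 _]]]]]]]]] u v Huv.
  rewrite (du_ext U _ (lin3 k1 k2 k3 0 (du f) (du g) (du h)) HU); auto.
  - apply (du_lin3_eq U); auto.
  - intros; apply (du_lin3_eq U); auto.
Qed.
Lemma dv_du_lin3 U k1 k2 k3 k0 f g h : open2 U -> C2 U f -> C2 U g -> C2 U h ->
  forall u v, U u v -> dv (du (lin3 k1 k2 k3 k0 f g h)) u v =
     lin3 k1 k2 k3 0 (dv (du f)) (dv (du g)) (dv (du h)) u v.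
Proof.
  intros HU [_ [f1 [f2 [_ [_ [f3 [f4 [f5 [f6 _]]]]]]]]] [_ [g1 [g2 [_ [_ [g3 [g4 [g5 [g6 _]]]]]]]]]
    [_ [h1 [h2 [_ [_ [h3 [h4 [h5 [h6 _]]]]]]]]] u v Huv.
  rewrite (dv_ext U _ (lin3 k1 k2 k3 0 (du f) (du g) (du h)) HU); auto.
  - apply (dv_lin3_eq U); auto.
  - intros; apply (du_lin3_eq U); auto.
Qed.
Lemma du_dv_lin3 U k1 k2 k3 k0 f g h : open2 U -> C2 U f -> C2 U g -> C2 U h ->
  forall u v, U u v -> du (dv (lin3 k1 k2 k3 k0 f g h)) u v =
     lin3 k1 k2 k3 0 (du (dv f)) (du (dv g)) (du (dv h)) u v.
Proof.
  intros HU [_ [f1 [f2 [_ [_ [f3 [f4 [f5 [f6 _]]]]]]]]] [_ [g1 [g2 [_ [_ [g3 [g4 [g5 [g6 _]]]]]]]]]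
    [_ [h1 [h2 [_ [_ [h3 [h4 [h5 [h6 _]]]]]]]]] u v Huv.
  rewrite (du_ext U _ (lin3 k1 k2 k3 0 (dv f) (dv g) (dv h)) HU); auto.
  - apply (du_lin3_eq U); auto.
  - intros; apply (dv_lin3_eq U); auto.
Qed.
Lemma dv_dv_lin3 U k1 k2 k3 k0 f g h : open2 U -> C2 U f -> C2 U g -> C2 U h ->
  forall u v, U u v -> dv (dv (lin3 k1 k2 k3 k0 f g h)) u v =
     lin3 k1 k2 k3 0 (dv (dv f)) (dv (dv g)) (dv (dv h)) u v.
Proof.
  intros HU [_ [f1 [f2 [_ [_ [f3 [f4 [f5 [f6 _]]]]]]]]] [_ [g1 [g2 [_ [_ [g3 [g4 [g5 [g6 _]]]]]]]]]
    [_ [h1 [h2 [_ [_ [h3 [h4 [h5 [h6 _]]]]]]]]] u v Huv.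
  rewrite (dv_ext U _ (lin3 k1 k2 k3 0 (dv f) (dv g) (dv h)) HU); auto.
  - apply (dv_lin3_eq U); auto.
  - intros; apply (dv_lin3_eq U); auto.
Qed.

Lemma C2_lin3 U k1 k2 k3 k0 f g h : open2 U -> C2 U f -> C2 U g -> C2 U h ->
  C2 U (lin3 k1 k2 k3 k0 f g h).
Proof.
  intros HU Cf Cg Ch.
  pose proof Cf as [f0 [f1 [f2 [f7 [f8 [f3 [f4 [f5 [f6 [f9 [f10 [f11 f12]]]]]]]]]]]].
  pose proof Cg as [g0 [g1 [g2 [g7 [g8 [g3 [g4 [g5 [g6 [g9 [g10 [g11 g12]]]]]]]]]]]].
  pose proof Ch as [h0 [h1 [h2 [h7 [h8 [h3 [h4 [h5 [h6 [h9 [h10 [h11 h12]]]]]]]]]]]].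
  assert (Edu : forall u v, U u v -> lin3 k1 k2 k3 0 (du f) (du g) (du h) u v = du (lin3 k1 k2 k3 k0 f g h) u v)
    by (intros; symmetry; apply (du_lin3_eq U); auto).
  assert (Edv : forall u v, U u v -> lin3 k1 k2 k3 0 (dv f) (dv g) (dv h) u v = dv (lin3 k1 k2 k3 k0 f g h) u v)
    by (intros; symmetry; apply (dv_lin3_eq U); auto).
  split; [apply cont2_lin3; auto|].
  split; [apply ex_du_lin3; auto|].
  split; [apply ex_dv_lin3; auto|].
  split; [eapply cont2_ext; [exact Edu|]; apply cont2_lin3; auto|].
  split; [eapply cont2_ext; [exact Edv|]; apply cont2_lin3; auto|].
  split; [eapply ex_du_ext; [exact HU|exact Edu|]; apply ex_du_lin3; auto|].
  split; [eapply ex_dv_ext; [exact HU|exact Edu|]; apply ex_dv_lin3; auto|].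
  split; [eapply ex_du_ext; [exact HU|exact Edv|]; apply ex_du_lin3; auto|].
  split; [eapply ex_dv_ext; [exact HU|exact Edv|]; apply ex_dv_lin3; auto|].
  split; [eapply cont2_ext; [intros u v Huv; symmetry; apply (du_du_lin3 U); auto|]; apply cont2_lin3; auto|].
  split; [eapply cont2_ext; [intros u v Huv; symmetry; apply (dv_du_lin3 U); auto|]; apply cont2_lin3; auto|].
  split; [eapply cont2_ext; [intros u v Huv; symmetry; apply (du_dv_lin3 U); auto|]; apply cont2_lin3; auto|].
  eapply cont2_ext; [intros u v Huv; symmetry; apply (dv_dv_lin3 U); auto|]; apply cont2_lin3; auto.
Qed.

Section Push.
Variable M : vec3 -> vec3.
Hypothesis HM : lorentz_linear M.
Variable c : vec3.
Variable X : R -> R -> vec3.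
Let Y := fun u v => vadd (M (X u v)) c.

Lemma M_lin : linear3 M. Proof. apply ll_linear; auto. Qed.
Lemma M_pres p q : lor (M p) (M q) = lor p q. Proof. destruct HM as [_ [_ h]]; auto. Qed.

Lemma comp_x : cX Y = lin3 (vx (M e1)) (vx (M e2)) (vx (M e3)) (vx c) (cX X) (cY X) (cZ X).
Proof.
  apply functional_extensionality; intro u; apply functional_extensionality; intro v.
  unfold cX, cY, cZ, Y, lin3, vadd; simpl. rewrite (lin_x M _ M_lin). ring.
Qed.
Lemma comp_y : cY Y = lin3 (vy (M e1)) (vy (M e2)) (vy (M e3)) (vy c) (cX X) (cY X) (cZ X).
Proof.
  apply functional_extensionality; intro u; apply functional_extensionality; intro v.
  unfold cX, cY, cZ, Y, lin3, vadd; simpl. rewrite (lin_y M _ M_lin). ring.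
Qed.
Lemma comp_z : cZ Y = lin3 (vz (M e1)) (vz (M e2)) (vz (M e3)) (vz c) (cX X) (cY X) (cZ X).
Proof.
  apply functional_extensionality; intro u; apply functional_extensionality; intro v.
  unfold cX, cY, cZ, Y, lin3, vadd; simpl. rewrite (lin_z M _ M_lin). ring.
Qed.

Variable U : R -> R -> Prop.
Hypothesis HU : open2 U.
Hypothesis CX : C2 U (cX X).
Hypothesis CY : C2 U (cY X).
Hypothesis CZ : C2 U (cZ X).

Lemma M_comp p : M p = V3
  (vx p * vx (M e1) + vy p * vx (M e2) + vz p * vx (M e3))
  (vx p * vy (M e1) + vy p * vy (M e2) + vz p * vy (M e3))
  (vx p * vz (M e1) + vy p * vz (M e2) + vz p * vz (M e3)).
Proof. apply vec_ext; simpl; [apply lin_x|apply lin_y|apply lin_z]; apply M_lin. Qed.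

Ltac getC2 H := let a := fresh in let b := fresh in let c := fresh in
  destruct H as [_ [a [b _]]].

Lemma vdu_push u v : U u v -> vdu Y u v = M (vdu X u v).
Proof.
  intro Huv. rewrite (M_comp (vdu X u v)).
  pose proof CX as [_ [x1 [x2 _]]]. pose proof CY as [_ [y1 [y2 _]]]. pose proof CZ as [_ [z1 [z2 _]]].
  unfold vdu. rewrite comp_x, comp_y, comp_z.
  rewrite !(du_lin3_eq U); auto. unfold lin3; simpl. apply vec_ext; simpl; ring.
Qed.
Lemma vdv_push u v : U u v -> vdv Y u v = M (vdv X u v).
Proof.
  intro Huv. rewrite (M_comp (vdv X u v)).
  pose proof CX as [_ [x1 [x2 _]]]. pose proof CY as [_ [y1 [y2 _]]]. pose proof CZ as [_ [z1 [z2 _]]].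
  unfold vdv. rewrite comp_x, comp_y, comp_z.
  rewrite !(dv_lin3_eq U); auto. unfold lin3; simpl. apply vec_ext; simpl; ring.
Qed.

Lemma vdudu_eq (Z : R -> R -> vec3) u v :
  vdu (vdu Z) u v = V3 (du (du (cX Z)) u v) (du (du (cY Z)) u v) (du (du (cZ Z)) u v).
Proof. reflexivity. Qed.
Lemma vdvdu_eq (Z : R -> R -> vec3) u v :
  vdv (vdu Z) u v = V3 (dv (du (cX Z)) u v) (dv (du (cY Z)) u v) (dv (du (cZ Z)) u v).
Proof. reflexivity. Qed.
Lemma vdvdv_eq (Z : R -> R -> vec3) u v :
  vdv (vdv Z) u v = V3 (dv (dv (cX Z)) u v) (dv (dv (cY Z)) u v) (dv (dv (cZ Z)) u v).
Proof. reflexivity. Qed.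

Lemma vdudu_push u v : U u v -> vdu (vdu Y) u v = M (vdu (vdu X) u v).
Proof.
  intro Huv. rewrite (M_comp (vdu (vdu X) u v)), !vdudu_eq.
  rewrite comp_x, comp_y, comp_z.
  rewrite !(du_du_lin3 U); auto. unfold lin3; simpl. apply vec_ext; simpl; ring.
Qed.
Lemma vdvdu_push u v : U u v -> vdv (vdu Y) u v = M (vdv (vdu X) u v).
Proof.
  intro Huv. rewrite (M_comp (vdv (vdu X) u v)), !vdvdu_eq.
  rewrite comp_x, comp_y, comp_z.
  rewrite !(dv_du_lin3 U); auto. unfold lin3; simpl. apply vec_ext; simpl; ring.
Qed.
Lemma vdvdv_push u v : U u v -> vdv (vdv Y) u v = M (vdv (vdv X) u v).
Proof.
  intro Huv. rewrite (M_comp (vdv (vdv X) u v)), !vdvdv_eq.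
  rewrite comp_x, comp_y, comp_z.
  rewrite !(dv_dv_lin3 U); auto. unfold lin3; simpl. apply vec_ext; simpl; ring.
Qed.

End Push.

Lemma chart_push S U X M c g : lorentz_linear M ->
  (forall p, S p -> S (vadd (M p) c)) -> (forall q, S q -> S (g q)) ->
  (forall p, g (vadd (M p) c) = p) -> (forall q, vadd (M (g q)) c = q) ->
  (forall eps, 0 < eps -> exists d, 0 < d /\ forall p q, near3 d p q -> near3 eps (g p) (g q)) ->
  is_chart S U X -> is_chart S U (fun u v => vadd (M (X u v)) c).
Proof.
  intros HM Sf Sg gf fg gc [HU [CX [CY [CZ [HS [Hinj [[W [HW1 [HW2 HW3]]] [Hhom Hmet]]]]]]]].
  split; [exact HU|].
  split; [rewrite (comp_x M HM c X); apply C2_lin3; auto|].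
  split; [rewrite (comp_y M HM c X); apply C2_lin3; auto|].
  split; [rewrite (comp_z M HM c X); apply C2_lin3; auto|].
  split; [intros; apply Sf, HS; auto|].
  split.
  { intros u v u' v' H1 H2 E. apply Hinj; auto. rewrite <- (gf (X u v)), <- (gf (X u' v')). rewrite E; auto. }
  split.
  { exists (fun q => W (g q)). split; [|split].
    - intros q Hq. destruct (HW1 _ Hq) as [d [Hd Hd']].
      destruct (gc d Hd) as [d2 [Hd2 Hg]]. exists d2; split; auto.
    - intros u v Huv. rewrite gf. auto.
    - intros q Sq Wq. destruct (HW3 (g q)) as [u [v [Huv E]]]; auto.
      exists u, v. split; auto. rewrite E. apply fg. }
  split.
  { intros u v Huv eps Heps. destruct (Hhom u v Huv eps Heps) as [d [Hd H]].
    destruct (gc d Hd) as [d2 [Hd2 Hg]]. exists d2; split; auto.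
    intros u' v' Huv' Hn. apply H; auto. rewrite <- (gf (X u v)), <- (gf (X u' v')). apply Hg; auto. }
  intros u v Huv. simpl.
  rewrite (vdu_push M HM c X U), (vdv_push M HM c X U); auto.
  rewrite !(M_pres M HM). apply Hmet; auto.
Qed.

Lemma normal_unique xu xv n m : lor n xu = 0 -> lor n xv = 0 -> lor m xu = 0 -> lor m xv = 0 ->
  lor n n = -1 -> lor m m = -1 ->
  0 < lor xu xu * lor xv xv - lor xu xv * lor xu xv ->
  exists e, (e = 1 \/ e = -1) /\ m = vscale e n.
Proof.
  intros h1 h2 h3 h4 hn hm hg.
  set (w := vadd m (vscale (lor m n) n)).
  assert (G : gram3 xu xv n <> 0).
  { unfold gram3. rewrite (lor_sym xu n), (lor_sym xv n), h1, h2, hn. intro E.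
    apply (Rlt_irrefl 0). rewrite <- E at 2. lra. }
  destruct (zero_lemma w xu xv n) as [z1 [z2 z3]]; auto.
  - unfold w. rewrite lor_vadd_l, lor_vscale_l, h1, h3. ring.
  - unfold w. rewrite lor_vadd_l, lor_vscale_l, h2, h4. ring.
  - unfold w. rewrite lor_vadd_l, lor_vscale_l, hn. ring.
  - assert (Em : m = vscale (- lor m n) n).
    { unfold w, vadd, vscale in z1, z2, z3; simpl in *. apply vec_ext; simpl; lra. }
    exists (- lor m n). split; auto.
    assert (Hsq : (- lor m n) * (- lor m n) = 1).
    { rewrite Em in hm. rewrite lor_vscale_l, lor_vscale_r, hn in hm. lra. }
    set (t := - lor m n) in *.
    assert ((t - 1) * (t + 1) = 0) by lra.
    destruct (Rmult_integral _ _ H) as [H1|H1]; [left|right]; lra.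
Qed.

Section Mean.
Variable S : vec3 -> Prop.
Variable N : vec3 -> vec3.
Hypothesis HN : unit_normal_field S N.
Variable M : vec3 -> vec3.
Hypothesis HM : lorentz_linear M.
Variable c : vec3.
Variable g : vec3 -> vec3.
Hypothesis Sf : forall p, S p -> S (vadd (M p) c).
Hypothesis Sg : forall q, S q -> S (g q).
Hypothesis gf : forall p, g (vadd (M p) c) = p.
Hypothesis fg : forall q, vadd (M (g q)) c = q.
Hypothesis gc : forall eps, 0 < eps -> exists d, 0 < d /\ forall p q, near3 d p q -> near3 eps (g p) (g q).

Lemma mean_push U X u v : is_chart S U X -> U u v ->
  exists e, (e = 1 \/ e = -1) /\
   N (vadd (M (X u v)) c) = vscale e (M (N (X u v))) /\
   mean_curv (fun u v => vadd (M (X u v)) c) N u v = e * mean_curv X N u v.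
Proof.
  intros HX Huv.
  pose proof (chart_push S U X M c g HM Sf Sg gf fg gc HX) as HY.
  pose proof HX as [HU [CX [CY [CZ [HS [_ [_ [_ Hmet]]]]]]]].
  destruct HN as [Hunit [Hort _]].
  destruct (Hort U X HX u v Huv) as [o1 o2].
  destruct (Hort _ _ HY u v Huv) as [o3 o4].
  rewrite (vdu_push M HM c X U) in o3 by auto.
  rewrite (vdv_push M HM c X U) in o4 by auto.
  destruct (normal_unique (M (vdu X u v)) (M (vdv X u v)) (M (N (X u v))) (N (vadd (M (X u v)) c)))
    as [e [He Ee]].
  - rewrite (M_pres M HM); auto.
  - rewrite (M_pres M HM); auto.
  - auto.
  - auto.
  - rewrite (M_pres M HM); auto.
  - apply Hunit. apply Sf, HS; auto.
  - rewrite !(M_pres M HM). destruct (Hmet u v Huv); lra.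
  - exists e. split; auto. split; auto.
    unfold mean_curv.
    rewrite (vdu_push M HM c X U), (vdv_push M HM c X U), (vdudu_push M HM c X U),
      (vdvdu_push M HM c X U), (vdvdv_push M HM c X U); auto.
    rewrite Ee. rewrite !lor_vscale_r, !(M_pres M HM).
    destruct (Hmet u v Huv) as [_ Hp].
    field. lra.
Qed.

Variable alpha : R.
Variable a : vec3.
Hypothesis Halpha : alpha <> 0.
Hypothesis Hden : forall p, S p -> lor p a <> 0.
Hypothesis HH : forall U X, is_chart S U X -> forall u v, U u v ->
     mean_curv X N u v = alpha * lor (N (X u v)) a / lor (X u v) a.
Hypothesis Hsurf : spacelike_surface S.

Lemma ratio_inv p : S p ->
  lor (N p) a * lor (vadd (M p) c) a = lor (M (N p)) a * lor p a.
Proof.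
  intro Sp. destruct (Hsurf p Sp) as [U [X [HX [u [v [Huv Ep]]]]]].
  destruct (mean_push U X u v HX Huv) as [e [He [EN Emc]]].
  pose proof (chart_push S U X M c g HM Sf Sg gf fg gc HX) as HY.
  pose proof (HH _ _ HY u v Huv) as E1. simpl in E1.
  rewrite Emc, (HH _ _ HX u v Huv), EN, lor_vscale_l in E1.
  rewrite Ep in E1.
  assert (D1 : lor p a <> 0) by auto.
  assert (D2 : lor (vadd (M p) c) a <> 0) by auto.
  assert (He0 : e <> 0) by (destruct He; lra).
  set (A1 := lor (N p) a) in *. set (B1 := lor (M (N p)) a) in *.
  set (d1 := lor p a) in *. set (d2 := lor (vadd (M p) c) a) in *.
  assert (E2 : e * (alpha * A1 / d1) * (d1 * d2) = alpha * (e * B1) / d2 * (d1 * d2)) by (rewrite E1; reflexivity).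
  replace (e * (alpha * A1 / d1) * (d1 * d2)) with ((alpha * e) * (A1 * d2)) in E2 by (field; auto).
  replace (alpha * (e * B1) / d2 * (d1 * d2)) with ((alpha * e) * (B1 * d1)) in E2 by (field; auto).
  apply Rmult_eq_reg_l in E2; auto.
Qed.
End Mean.

Lemma alg_core n1 n2 n3 q1 q2 q3 a1 a2 a3 be C Sh :
  Sh <> 0 -> C <> 1 -> a1 <> 0 -> a2 * a2 - a3 * a3 <> 0 ->
  n1*a1 + n2*a2 - n3*a3 <> 0 ->
  (n1*a1 + n2*a2 - n3*a3) * (q1*a1 + (C*q2 + Sh*q3)*a2 - (Sh*q2 + C*q3)*a3 + be)
   = (n1*a1 + (C*n2 + Sh*n3)*a2 - (Sh*n2 + C*n3)*a3) * (q1*a1 + q2*a2 - q3*a3 + be) ->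
  (n1*a1 + n2*a2 - n3*a3) * (q1*a1 + (C*q2 + - Sh*q3)*a2 - (- Sh*q2 + C*q3)*a3 + be)
   = (n1*a1 + (C*n2 + - Sh*n3)*a2 - (- Sh*n2 + C*n3)*a3) * (q1*a1 + q2*a2 - q3*a3 + be) ->
  let P := n1*a1 + n2*a2 - n3*a3 in
  let Q := q1*a1 + q2*a2 - q3*a3 + be in
  q1 + be / a1 = Q / P * n1 /\ q2 = Q / P * n2 /\ q3 = Q / P * n3.
Proof.
  intros HS HC Ha1 Ha HP Ep Em P Q.
  fold P Q in Ep, Em, HP.
  set (Cq := q2*a2 - q3*a3). set (Cn := n2*a2 - n3*a3).
  set (Dq := q3*a2 - q2*a3). set (Dn := n3*a2 - n2*a3).
  assert (ED : P * Dq = Dn * Q).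
  { assert (I : 2 * Sh * (P * Dq - Dn * Q) =
      (P * (q1*a1 + (C*q2 + Sh*q3)*a2 - (Sh*q2 + C*q3)*a3 + be) - (n1*a1 + (C*n2 + Sh*n3)*a2 - (Sh*n2 + C*n3)*a3) * Q)
      - (P * (q1*a1 + (C*q2 + - Sh*q3)*a2 - (- Sh*q2 + C*q3)*a3 + be) - (n1*a1 + (C*n2 + - Sh*n3)*a2 - (- Sh*n2 + C*n3)*a3) * Q))
      by (unfold P, Q, Dq, Dn; ring).
    rewrite Ep, Em in I. assert (2 * Sh * (P * Dq - Dn * Q) = 0) by (rewrite I; ring).
    apply Rmult_integral in H. destruct H as [H|H]; [exfalso; apply HS; lra|lra]. }
  assert (EC : P * Cq = Cn * Q).
  { assert (I : 2 * (C - 1) * (P * Cq - Cn * Q) =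
      (P * (q1*a1 + (C*q2 + Sh*q3)*a2 - (Sh*q2 + C*q3)*a3 + be) - (n1*a1 + (C*n2 + Sh*n3)*a2 - (Sh*n2 + C*n3)*a3) * Q)
      + (P * (q1*a1 + (C*q2 + - Sh*q3)*a2 - (- Sh*q2 + C*q3)*a3 + be) - (n1*a1 + (C*n2 + - Sh*n3)*a2 - (- Sh*n2 + C*n3)*a3) * Q))
      by (unfold P, Q, Cq, Cn; ring).
    rewrite Ep, Em in I. assert (2 * (C - 1) * (P * Cq - Cn * Q) = 0) by (rewrite I; ring).
    apply Rmult_integral in H. destruct H as [H|H]; [exfalso; apply HC; lra|lra]. }
  assert (E1 : P * (q1 * a1 + be) = n1 * a1 * Q).
  { transitivity (P * Q - P * Cq). unfold Q, Cq; ring. rewrite EC. unfold P, Cn; ring. }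
  assert (U2 : (a2*a2 - a3*a3) * (P * q2 - Q * n2) = 0).
  { transitivity (a2 * (P * Cq - Cn * Q) + a3 * (P * Dq - Dn * Q)). unfold Cq, Cn, Dq, Dn; ring.
    rewrite EC, ED; ring. }
  assert (U3 : (a2*a2 - a3*a3) * (P * q3 - Q * n3) = 0).
  { transitivity (a2 * (P * Dq - Dn * Q) + a3 * (P * Cq - Cn * Q)). unfold Cq, Cn, Dq, Dn; ring.
    rewrite EC, ED; ring. }
  apply Rmult_integral in U2. apply Rmult_integral in U3.
  destruct U2 as [U2|U2]; [contradiction|]. destruct U3 as [U3|U3]; [contradiction|].
  split; [|split].
  - transitivity ((P*(q1*a1+be)) / (P*a1)); [field; auto|]. rewrite E1. field; auto.
  - transitivity ((P*q2)/P); [field; auto|]. replace (P*q2) with (Q*n2) by lra. field; auto.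
  - transitivity ((P*q3)/P); [field; auto|]. replace (P*q3) with (Q*n3) by lra. field; auto.
Qed.

Lemma timelike_nonorth u v : lor u u < 0 -> lor v v < 0 -> lor u v <> 0.
Proof.
  destruct u as [u1 u2 u3], v as [v1 v2 v3]; unfold lor; simpl. intros Hu Hv E.
  assert (CS : (u1*v1 + u2*v2) * (u1*v1 + u2*v2) <= (u1*u1 + u2*u2) * (v1*v1 + v2*v2)).
  { assert (0 <= (u1*v2 - u2*v1) * (u1*v2 - u2*v1)) by apply Rle_0_sqr. nra. }
  assert (X1 : 0 <= u1*u1 + u2*u2) by nra. assert (X2 : 0 <= v1*v1 + v2*v2) by nra.
  assert (P1 : (u1*u1 + u2*u2) * (v1*v1 + v2*v2) <= (u1*u1+u2*u2) * (v3*v3)) by (apply Rmult_le_compat_l; lra).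
  assert (P2 : (u1*u1+u2*u2) * (v3*v3) < (u3*u3) * (v3*v3)) by (apply Rmult_lt_compat_r; nra).
  assert (E2 : (u1*v1 + u2*v2) = u3 * v3) by lra.
  rewrite E2 in CS. nra.
Qed.

Lemma is_derive_sq (g : R -> R) x dg k : is_derive g x dg ->
  is_derive (fun s => (g s + k) * (g s + k)) x (2 * (g x + k) * dg).
Proof.
  intro H. auto_derive. { repeat split; eexists; eauto. }
  change (Derive (fun x => g x) x) with (Derive g x). rewrite (is_derive_unique _ _ _ H). ring.
Qed.
Lemma is_derive_pm (f g h : R -> R) x df dg dh : is_derive f x df -> is_derive g x dg -> is_derive h x dh ->
  is_derive (fun s => f s + g s - h s) x (df + dg - dh).
Proof.
  intros Hf Hg Hh. auto_derive. { repeat split; eexists; eauto. }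
  change (Derive (fun x => f x) x) with (Derive f x).
  change (Derive (fun x => g x) x) with (Derive g x).
  change (Derive (fun x => h x) x) with (Derive h x).
  rewrite (is_derive_unique _ _ _ Hf), (is_derive_unique _ _ _ Hg), (is_derive_unique _ _ _ Hh). ring.
Qed.

Definition phi (c : vec3) (p : vec3) : R := lor (vadd p (vscale (-1) c)) (vadd p (vscale (-1) c)).

Lemma is_derive_phi (Z : R -> vec3) x dz c :
  is_derive (fun s => vx (Z s)) x (vx dz) -> is_derive (fun s => vy (Z s)) x (vy dz) ->
  is_derive (fun s => vz (Z s)) x (vz dz) ->
  is_derive (fun s => phi c (Z s)) x (2 * lor (vadd (Z x) (vscale (-1) c)) dz).
Proof.
  intros H1 H2 H3.
  pose proof (is_derive_pm _ _ _ x _ _ _ (is_derive_sq _ x _ (-1 * vx c) H1)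
     (is_derive_sq _ x _ (-1 * vy c) H2) (is_derive_sq _ x _ (-1 * vz c) H3)) as H.
  assert (E : 2 * lor (vadd (Z x) (vscale (-1) c)) dz = 2 * (vx (Z x) + -1 * vx c) * vx dz
     + 2 * (vy (Z x) + -1 * vy c) * vy dz - 2 * (vz (Z x) + -1 * vz c) * vz dz)
    by (unfold lor, vadd, vscale; cbn [vx vy vz]; ring).
  rewrite E. exact H.
Qed.

Lemma near3_mono d d' p q : d <= d' -> near3 d p q -> near3 d' p q.
Proof. unfold near3. intros H [h1 [h2 h3]]. repeat split; lra. Qed.

Lemma phi_loc S N c : unit_normal_field S N -> spacelike_surface S ->
  (forall p, S p -> exists k, vadd p (vscale (-1) c) = vscale k (N p)) ->
  forall p, S p -> exists d, 0 < d /\ forall q, S q -> near3 d p q -> phi c q = phi c p.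
Proof.
  intros HN Hs HK p Sp. destruct (Hs p Sp) as [U [X [HX [u0 [v0 [Huv0 Ep]]]]]].
  pose proof HX as [HU [CX [CY [CZ [HS [_ [[W [HW1 [HW2 HW3]]] [Hhom _]]]]]]]].
  destruct HN as [_ [Hort _]].
  pose proof CX as [_ [x1 [x2 _]]]. pose proof CY as [_ [y1 [y2 _]]]. pose proof CZ as [_ [z1 [z2 _]]].
  set (f := fun u v => phi c (X u v)).
  assert (Du : forall u v, U u v -> is_derive (fun s => f s v) u 0).
  { intros u v Huv. unfold f.
    pose proof (is_derive_phi (fun s => X s v) u (vdu X u v) c) as H.
    destruct (HK (X u v)) as [k Hk]; [apply HS; auto|].
    cbv beta in H. rewrite Hk, lor_vscale_l in H. destruct (Hort U X HX u v Huv) as [o1 _].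
    rewrite o1 in H. replace (2 * (k * 0)) with 0 in H by ring. apply H.
    - apply (Derive_correct (fun s => cX X s v)). apply x1; auto.
    - apply (Derive_correct (fun s => cY X s v)). apply y1; auto.
    - apply (Derive_correct (fun s => cZ X s v)). apply z1; auto. }
  assert (Dv : forall u v, U u v -> is_derive (fun t => f u t) v 0).
  { intros u v Huv. unfold f.
    pose proof (is_derive_phi (fun t => X u t) v (vdv X u v) c) as H.
    destruct (HK (X u v)) as [k Hk]; [apply HS; auto|].
    cbv beta in H. rewrite Hk, lor_vscale_l in H. destruct (Hort U X HX u v Huv) as [_ o2].
    rewrite o2 in H. replace (2 * (k * 0)) with 0 in H by ring. apply H.
    - apply (Derive_correct (fun t => cX X u t)). apply x2; auto.
    - apply (Derive_correct (fun t => cY X u t)). apply y2; auto.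
    - apply (Derive_correct (fun t => cZ X u t)). apply z2; auto. }
  destruct (HU u0 v0 Huv0) as [dl [Hdl Hbox]].
  assert (Cst : forall u' v', Rabs (u' - u0) < dl -> Rabs (v' - v0) < dl -> f u' v' = f u0 v0).
  { intros u' v' H1 H2.
    destruct (MVT_cor4 (fun s => f s v') (fun _ => 0) u0 (Rabs (u' - u0))) with (b := u') as [c1 [Ec1 _]].
    { intros c0 Hc0. apply Du. apply Hbox; auto. lra. }
    { lra. }
    destruct (MVT_cor4 (fun t => f u0 t) (fun _ => 0) v0 (Rabs (v' - v0))) with (b := v') as [c2 [Ec2 _]].
    { intros c0 Hc0. apply Dv. apply Hbox; auto. rewrite Rminus_diag, Rabs_R0; auto. lra. }
    { lra. }
    simpl in Ec1, Ec2. lra. }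
  destruct (Hhom u0 v0 Huv0 dl Hdl) as [d1 [Hd1 Hh]].
  destruct (HW1 p) as [d2 [Hd2 Hw]]. { rewrite <- Ep. apply HW2; auto. }
  exists (Rmin d1 d2). split. { apply Rmin_pos; auto. }
  intros q Sq Hn.
  destruct (HW3 q Sq) as [u' [v' [Huv' Eq]]].
  { apply Hw. eapply near3_mono; [apply Rmin_r|exact Hn]. }
  destruct (Hh u' v') as [H1 H2]; auto.
  { rewrite Ep, Eq. eapply near3_mono; [apply Rmin_l|exact Hn]. }
  rewrite <- Eq, <- Ep. apply (Cst u' v'); auto.
Qed.

Lemma loc_const S (F : vec3 -> R) : connected S ->
  (forall p, S p -> exists d, 0 < d /\ forall q, S q -> near3 d p q -> F q = F p) ->
  forall p0 p, S p0 -> S p -> F p = F p0.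
Proof.
  intros HC HL p0 p S0 Sp.
  destruct (HC (fun q => F q = F p0)) as [H|H].
  - intros x Sx Px. destruct (HL x Sx) as [d [Hd H]]. exists d; split; auto.
    intros q Sq Hq. rewrite H; auto.
  - intros x Sx Px. destruct (HL x Sx) as [d [Hd H]]. exists d; split; auto.
    intros q Sq Hq. rewrite H; auto.
  - apply H; auto.
  - exfalso. apply (H p0 S0). reflexivity.
Qed.

Lemma sign_const S (F : vec3 -> R) : connected S ->
  (forall p eps, S p -> 0 < eps -> exists d, 0 < d /\ forall q, S q -> near3 d p q -> Rabs (F q - F p) < eps) ->
  (forall p, S p -> F p <> 0) ->
  (forall p, S p -> 0 < F p) \/ (forall p, S p -> F p < 0).
Proof.
  intros HC Hc Hnz.
  destruct (HC (fun q => 0 < F q)) as [H|H].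
  - intros x Sx Px. destruct (Hc x (F x) Sx Px) as [d [Hd H]]. exists d; split; auto.
    intros q Sq Hq. specialize (H q Sq Hq). apply Rabs_def2 in H. lra.
  - intros x Sx Px. assert (F x < 0) by (pose proof (Hnz x Sx); lra).
    destruct (Hc x (- F x) Sx) as [d [Hd H']]; [lra|]. exists d; split; auto.
    intros q Sq Hq. specialize (H' q Sq Hq). apply Rabs_def2 in H'. lra.
  - left; auto.
  - right. intros p Sp. pose proof (Hnz p Sp). pose proof (H p Sp). lra.
Qed.

Lemma rotx_inv' t p : rotx (- t) (rotx t p) = p.
Proof. rewrite <- (Ropp_involutive t) at 2. apply rotx_inv. Qed.

Lemma near3_shift d x y c : near3 d x y -> near3 d (vadd x c) (vadd y c).
Proof.
  unfold near3, vadd; simpl. intros [h1 [h2 h3]].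
  replace (vx y + vx c - (vx x + vx c)) with (vx y - vx x) by ring.
  replace (vy y + vy c - (vy x + vy c)) with (vy y - vy x) by ring.
  replace (vz y + vz c - (vz x + vz c)) with (vz y - vz x) by ring. auto.
Qed.

Lemma sinh1_pos : 0 < sinh 1.
Proof.
  unfold sinh. assert (exp (Ropp 1) < exp 1) by (apply exp_increasing; lra). lra.
Qed.
Lemma cosh1_gt1 : 1 < cosh 1.
Proof.
  pose proof sinh1_pos. pose proof (cosh_sinh 1).
  assert (0 < cosh 1) by (unfold cosh; pose proof (exp_pos 1); pose proof (exp_pos (Ropp 1)); lra).
  nra.
Qed.

Section Main.
Variable alpha : R.
Variable a : vec3.
Variable S : vec3 -> Prop.
Variable N : vec3 -> vec3.
Variable A : vec3 -> vec3.
Variable b : vec3.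
Hypothesis Halpha : alpha <> 0.
Hypothesis Ha : timelike a.
Hypothesis Hsurf : spacelike_surface S.
Hypothesis HN : unit_normal_field S N.
Hypothesis HA : lorentz_linear A.
Hypothesis Hinv : forall theta q, S (motion A b q) -> S (motion A b (rotx theta q)).
Hypothesis Hden : forall p, S p -> lor p a <> 0.
Hypothesis HH : forall U X, is_chart S U X -> forall u v, U u v ->
     mean_curv X N u v = alpha * lor (N (X u v)) a / lor (X u v) a.

Definition Mrot t p := A (rotx t (Ainv A p)).
Definition crot t := vadd b (vscale (-1) (Mrot t b)).
Definition frot t p := vadd (Mrot t p) (crot t).

Lemma Mrot_ll t : lorentz_linear (Mrot t).
Proof. unfold Mrot. apply ll_comp; auto. apply ll_comp. apply rotx_ll. apply Ainv_ll; auto. Qed.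

Lemma Mrot_inv t x : Mrot (- t) (Mrot t x) = x.
Proof. unfold Mrot. rewrite (Ainv_A A HA), rotx_inv', (A_Ainv A HA). reflexivity. Qed.

Lemma frot_inv t p : frot (- t) (frot t p) = p.
Proof.
  unfold frot, crot. destruct (ll_linear _ (Mrot_ll (- t))) as [l1 l2].
  rewrite !l1, !l2, !Mrot_inv. apply vec_ext; unfold vadd, vscale; simpl; ring.
Qed.

Lemma frot_motion t p : frot t p = motion A b (rotx t (Ainv A (vadd p (vscale (-1) b)))).
Proof.
  unfold frot, crot, motion. destruct (ll_linear _ (Mrot_ll t)) as [l1 l2].
  fold (Mrot t (vadd p (vscale (-1) b))). rewrite l1, l2.
  apply vec_ext; unfold vadd, vscale; simpl; ring.
Qed.

Lemma p_eq p : p = vadd (A (Ainv A (vadd p (vscale (-1) b)))) b.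
Proof. rewrite (A_Ainv A HA). apply vec_ext; unfold vadd, vscale; simpl; ring. Qed.

Lemma frot_S t p : S p -> S (frot t p).
Proof.
  intro Sp. rewrite frot_motion. apply Hinv. unfold motion. rewrite <- p_eq. auto.
Qed.

Lemma frot_cont t : forall eps, 0 < eps -> exists d, 0 < d /\
  forall p q, near3 d p q -> near3 eps (frot t p) (frot t q).
Proof.
  intros eps He. destruct (lin_cont (Mrot t) (ll_linear _ (Mrot_ll t)) eps He) as [d [Hd H]].
  exists d; split; auto. intros. unfold frot. apply near3_shift; auto.
Qed.

Lemma R1 t p : S p -> lor (N p) a * lor (frot t p) a = lor (Mrot t (N p)) a * lor p a.
Proof.
  intro Sp.
  assert (Sf : forall p, S p -> S (vadd (Mrot t p) (crot t))) by (intros; apply frot_S; auto).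
  assert (Sg : forall q, S q -> S (frot (- t) q)) by (intros; apply frot_S; auto).
  assert (gf : forall p, frot (- t) (vadd (Mrot t p) (crot t)) = p) by (intro; apply (frot_inv t)).
  assert (fg : forall q, vadd (Mrot t (frot (- t) q)) (crot t) = q).
  { intro q. fold (frot t (frot (- t) q)). rewrite <- (Ropp_involutive t) at 1. apply frot_inv. }
  exact (ratio_inv S N HN (Mrot t) (Mrot_ll t) (crot t) (frot (- t)) Sf Sg gf fg (frot_cont (- t))
     alpha a Halpha Hden HH Hsurf p Sp).
Qed.

Lemma lor_rotx t x y : lor (rotx t x) y =
  vx x * vx y + (cosh t * vy x + sinh t * vz x) * vy y - (sinh t * vy x + cosh t * vz x) * vz y.
Proof. reflexivity. Qed.
Lemma lor_expand x y : lor x y = vx x * vx y + vy x * vy y - vz x * vz y.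
Proof. reflexivity. Qed.

Definition a' := Ainv A a.
Definition be := lor b a.
Definition z0 := V3 (- be / vx a') 0 0.
Definition cc := vadd b (A z0).

Lemma K1 p : S p -> vx a' <> 0 -> exists k, k <> 0 /\ vadd p (vscale (-1) cc) = vscale k (N p).
Proof.
  intros Sp Ha1.
  set (q := Ainv A (vadd p (vscale (-1) b))).
  set (n := Ainv A (N p)).
  assert (Hp : p = vadd (A q) b) by apply p_eq.
  assert (Hn : N p = A n) by (unfold n; rewrite (A_Ainv A HA); auto).
  assert (L1 : forall t x, lor (Mrot t x) a = lor (rotx t (Ainv A x)) a').
  { intros. unfold Mrot, a'. apply (lor_A_l A HA). }
  assert (L2 : forall t, lor (frot t p) a = lor (rotx t q) a' + be).
  { intros. rewrite frot_motion. fold q. unfold motion, be. rewrite lor_vadd_l, (lor_A_l A HA). auto. }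
  assert (L3 : lor p a = lor q a' + be).
  { rewrite Hp at 1. unfold be. rewrite lor_vadd_l, (lor_A_l A HA). auto. }
  assert (L4 : lor (N p) a = lor n a') by (rewrite Hn; apply (lor_A_l A HA)).
  pose proof (R1 1 p Sp) as E1. pose proof (R1 (Ropp 1) p Sp) as E2.
  rewrite L1, L2, L3, L4 in E1, E2. fold n in E1, E2.
  assert (Hta : lor a' a' < 0) by (unfold a'; rewrite (Ainv_pres A HA); exact Ha).
  assert (HP : lor n a' <> 0).
  { rewrite <- L4. apply timelike_nonorth; [|exact Ha]. destruct HN as [h _]. rewrite h; auto; lra. }
  assert (HQ : lor q a' + be <> 0) by (rewrite <- L3; auto).
  clearbody q n.
  rewrite !lor_rotx in E1, E2. rewrite cosh_opp, sinh_opp in E2.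
  rewrite lor_expand in E1, E2, Hta, HP, HQ.
  pose proof sinh1_pos. pose proof cosh1_gt1.
  destruct (alg_core (vx n) (vy n) (vz n) (vx q) (vy q) (vz q) (vx a') (vy a') (vz a') be (cosh 1) (sinh 1))
    as [F1 [F2 F3]]; auto.
  { apply Rgt_not_eq; auto. }
  { apply Rgt_not_eq; auto. }
  { intro E. assert (vx a' * vx a' >= 0) by nra. lra. }
  exists ((vx q * vx a' + vy q * vy a' - vz q * vz a' + be) / (vx n * vx a' + vy n * vy a' - vz n * vz a')).
  split.
  { unfold Rdiv. apply Rmult_integral_contrapositive. split; auto. apply Rinv_neq_0_compat. auto. }
  set (k := (vx q * vx a' + vy q * vy a' - vz q * vz a' + be) / (vx n * vx a' + vy n * vy a' - vz n * vz a')) in *.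
  assert (Hw : vadd q (vscale (-1) z0) = vscale k n).
  { apply vec_ext; unfold vadd, vscale, z0; cbn [vx vy vz]; [|lra|lra].
    rewrite <- F1. unfold Rdiv. ring. }
  destruct (ll_linear A HA) as [l1 l2].
  rewrite Hn, <- l2, <- Hw, l1, l2. rewrite Hp at 1. unfold cc.
  apply vec_ext; unfold vadd, vscale; simpl; ring.
Qed.

Definition Tsig (s : R) (v : vec3) : vec3 := V3 (vx v) (vy v) (s * vz v).
Definition Bmap s p := Tsig s (Ainv A p).
Definition cvec s := vscale (-1) (Tsig s (Ainv A cc)).
Definition psi p := vz (Ainv A (vadd p (vscale (-1) cc))).

Lemma Bc s p : vadd (Bmap s p) (cvec s) = Tsig s (Ainv A (vadd p (vscale (-1) cc))).
Proof.
  destruct (Ainv_lin A) as [l1 l2]. unfold Bmap, cvec. rewrite l1, l2.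
  apply vec_ext; unfold Tsig, vadd, vscale; cbn [vx vy vz]; ring.
Qed.

Lemma Tsig_pres s x y : s * s = 1 -> lor (Tsig s x) (Tsig s y) = lor x y.
Proof.
  intro H. unfold lor, Tsig; cbn [vx vy vz].
  transitivity (vx x * vx y + vy x * vy y - (s * s) * (vz x * vz y)); [ring|]. rewrite H; ring.
Qed.

Lemma B_ll s : s * s = 1 -> lorentz_linear (Bmap s).
Proof.
  intro Hs. destruct (Ainv_lin A) as [l1 l2]. unfold Bmap.
  split; [|split].
  - intros. rewrite l1. apply vec_ext; unfold Tsig, vadd; cbn [vx vy vz]; ring.
  - intros. rewrite l2. apply vec_ext; unfold Tsig, vscale; cbn [vx vy vz]; ring.
  - intros. rewrite Tsig_pres; auto. apply Ainv_pres; auto.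
Qed.

Lemma axis_comp t : vy (Ainv A (vadd (vadd (A (vscale t e1)) b) (vscale (-1) cc))) = 0 /\
                    vz (Ainv A (vadd (vadd (A (vscale t e1)) b) (vscale (-1) cc))) = 0.
Proof.
  destruct (Ainv_lin A) as [l1 l2]. unfold cc. rewrite !l1, !l2, !l1, !(Ainv_A A HA).
  unfold z0, vadd, vscale, e1; cbn [vx vy vz]. split; ring.
Qed.

Lemma finish s r : s * s = 1 -> 0 < r ->
  (forall p, S p -> phi cc p = - r ^ 2 /\ 0 < s * psi p) ->
  exists (r : R) (B : vec3 -> vec3) (c : vec3),
    0 < r /\ rigid_motion B c /\
    (forall t, on_x_axis (motion B c (motion A b (vscale t e1)))) /\
    (forall p, S p -> in_H2 r (motion B c p)).
Proof.
  intros Hs Hr HP. exists r, (Bmap s), (cvec s). split; auto. split; [apply B_ll; auto|]. split.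
  - intro t. unfold motion. rewrite Bc. destruct (axis_comp t) as [h1 h2].
    unfold on_x_axis, Tsig; cbn [vy vz]. rewrite h1, h2. split; ring.
  - intros p Sp. destruct (HP p Sp) as [h1 h2]. unfold motion. rewrite Bc. split.
    + rewrite Tsig_pres, (Ainv_pres A HA); auto.
    + unfold Tsig; cbn [vz]. exact h2.
Qed.

Hypothesis Hconn : connected S.

Lemma conclusion_sec : lor a (A e1) = 0 \/
  exists (r : R) (B : vec3 -> vec3) (c : vec3),
    0 < r /\ rigid_motion B c /\
    (forall t, on_x_axis (motion B c (motion A b (vscale t e1)))) /\
    (forall p, S p -> in_H2 r (motion B c p)).
Proof.
  destruct (Req_dec (lor a (A e1)) 0) as [H0|H0]; [left; auto|right].
  assert (Ha1 : vx a' <> 0) by exact H0.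
  assert (HK : forall p, S p -> exists k, vadd p (vscale (-1) cc) = vscale k (N p)).
  { intros p Sp. destruct (K1 p Sp Ha1) as [k [_ Hk]]. exists k; auto. }
  assert (Hneg : forall p, S p -> phi cc p < 0).
  { intros p Sp. destruct (K1 p Sp Ha1) as [k [Hk0 Hk]]. unfold phi. rewrite Hk.
    rewrite lor_vscale_l, lor_vscale_r. destruct HN as [h _]. rewrite h; auto.
    assert (0 < k * k) by (apply Rsqr_pos_lt; auto). lra. }
  destruct (classic (exists p0, S p0)) as [[p0 S0]|Hne].
  - assert (Hc : forall p, S p -> phi cc p = phi cc p0).
    { intros p Sp. apply (loc_const S (phi cc) Hconn); auto. apply (phi_loc S N cc HN Hsurf HK). }
    assert (Hpsi : forall p, S p -> psi p <> 0).
    { intros p Sp E. pose proof (Hneg p Sp) as Hn. unfold phi in Hn.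
      rewrite <- (Ainv_pres A HA) in Hn. unfold psi in E. rewrite lor_expand, E in Hn. nra. }
    assert (Hcont : forall p eps, S p -> 0 < eps -> exists d, 0 < d /\
        forall q, S q -> near3 d p q -> Rabs (psi q - psi p) < eps).
    { intros p eps Sp He. destruct (lin_cont (Ainv A) (Ainv_lin A) eps He) as [d [Hd H]].
      exists d; split; auto. intros q Sq Hq.
      destruct (H _ _ (near3_shift d p q (vscale (-1) cc) Hq)) as [_ [_ h3]]. exact h3. }
    set (r := sqrt (- phi cc p0)).
    assert (Hr : 0 < r) by (apply sqrt_lt_R0; pose proof (Hneg p0 S0); lra).
    assert (Hr2 : r ^ 2 = - phi cc p0).
    { unfold r. simpl. rewrite Rmult_1_r. apply sqrt_sqrt. pose proof (Hneg p0 S0); lra. }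
    destruct (sign_const S psi Hconn Hcont Hpsi) as [Hs|Hs].
    + apply (finish 1 r); auto; [ring|]. intros p Sp. split; [rewrite Hc; auto; lra|].
      rewrite Rmult_1_l; auto.
    + apply (finish (-1) r); auto; [ring|]. intros p Sp. split; [rewrite Hc; auto; lra|].
      pose proof (Hs p Sp); lra.
  - apply (finish 1 1); [ring|lra|]. intros p Sp. exfalso. apply Hne. exists p; auto.
Qed.
End Main.

Theorem proposition2p3
  (alpha : R) (a : vec3) (S : vec3 -> Prop) (N : vec3 -> vec3)
  (A : vec3 -> vec3) (b : vec3) :
  alpha <> 0 ->
  timelike a ->
  spacelike_surface S ->
  connected S ->
  unit_normal_field S N ->
  (* the axis L is the image of the x-axis under the rigid motion (A,b);
     S is invariant under all rotations about L *)
  rigid_motion A b ->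
  (forall theta q, S (motion A b q) -> S (motion A b (rotx theta q))) ->
  (forall p, S p -> lor p a <> 0) ->
  (forall U X, is_chart S U X -> forall u v, U u v ->
     mean_curv X N u v = alpha * lor (N (X u v)) a / lor (X u v) a) ->
  lor a (A e1) = 0 \/
  exists (r : R) (B : vec3 -> vec3) (c : vec3),
    0 < r /\ rigid_motion B c /\
    (forall t, on_x_axis (motion B c (motion A b (vscale t e1)))) /\
    (forall p, S p -> in_H2 r (motion B c p)).
Proof.
  intros Hal Ha Hs Hc HN HA Hinv Hden HH.
  eapply conclusion_sec; eauto.
Qed.
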